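(* Let $g$ be monotone increasing and satisfy hypothesis (H), let $h\ge0$, let $\phi(x+ct)$ with $c=c_*>c_\#$ be a pushed traveling front, and fix $\lambda\in(\lambda_1(c),\lambda_2(c))$. There exist constants $\gamma>0$ and $\delta>0$ such that the following holds. Let $w$ be a solution of $$w_t(t,z)=w_{zz}(t,z)-cw_z(t,z)-w(t,z)+g(w(t-h,z-ch)),\ t>0,\ z\in\mathbb{R},$$ with continuous initial datum $w(s,z)=\tilde w_0(s,z)\in[0,\kappa]$, $s\in[-h,0]$, locally Hölder in $z$ uniformly in $s$. Let $R>ch$ be such that $0\le w(t,z),\phi(z)\le\delta$ whenever $z\le-R+ch$, $t\ge-h$, and $|w(t,z)-\kappa|,|\phi(z)-\kappa|<\delta$ whenever $z\ge R-ch$, $t\ge-h$. Suppose further that $w(s,z)\le\phi(z)+\delta\eta(z)$ for all $(s,z)\in[-h,0]\times\mathbb{R}$ and $w(t,z)\le\phi(z)$ for all $(t,z)\in\mathbb{R}_+\times[-R-ch,R+ch]$. Then $w(t,z)\le\phi(z)+\delta\eta(z)e^{-\gamma t}$ for all $z\in\mathbb{R}$, $t\ge0$.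
   Context: Hypothesis (H) on $g:\mathbb{R}_+\to\mathbb{R}_+$: $g(x)=x$ has exactly two nonnegative solutions $0$ and $\kappa>0$; $g$ is $C^1$ in a $\delta_0$-neighbourhood of $0$ and of $\kappa$, with $g'(0)>1$, $g'(\kappa)<1$; $|g(u)-g(v)|\le L_g|u-v|$ for $u,v\in[0,\kappa]$; there are $C>0,\theta\in(0,1]$ with $|g'(u)-g'(0)|+|g'(\kappa)-g'(\kappa-u)|\le Cu^\theta$ for $u\in(0,\delta_0]$; $g$ is extended linearly and $C^1$-smoothly to $(-\infty,0]$ and $[\kappa,\infty)$. Characteristic function $\chi(z,c)=z^2-cz-1+g'(0)e^{-zch}$; $c_\#$ is the unique real $c$ for which $\chi(\cdot,c)$ has a positive double zero; for $c>c_\#$ its two positive simple zeros are $\lambda_1(c)<\lambda_2(c)$. A wavefront is a solution $u=\phi(x+ct)$ of $u_t=u_{xx}-u+g(u(t-h,x))$ with $\phi>0$, $\phi(-\infty)=0$, $\phi(+\infty)=\kappa$; $c_*$ is the minimal wavefront speed; the minimal wavefront is pushed if $c_*>c_\#$. $\eta(z)=\min\{e^{\lambda z},1\}$. *)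

(* Defs.v *)
From Stdlib Require Import Reals.
From Coquelicot Require Import Coquelicot.
Open Scope R_scope.

Definition hyp_H (g : R -> R) (kappa : R) : Prop :=
  0 < kappa /\ g 0 = 0 /\ g kappa = kappa /\
  (forall x, 0 <= x -> g x = x -> x = 0 \/ x = kappa) /\
  exists delta0 Lg C theta : R,
    0 < delta0 /\ 0 < C /\ 0 < theta /\ theta <= 1 /\
    (forall x, Rabs x < delta0 ->
       ex_derive g x /\ continuous (Derive g) x) /\
    (forall x, Rabs (x - kappa) < delta0 ->
       ex_derive g x /\ continuous (Derive g) x) /\
    Derive g 0 > 1 /\ Derive g kappa < 1 /\
    (forall u v, 0 <= u <= kappa -> 0 <= v <= kappa ->
       Rabs (g u - g v) <= Lg * Rabs (u - v)) /\
    (forall u, 0 < u <= delta0 ->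
       Rabs (Derive g u - Derive g 0) + Rabs (Derive g kappa - Derive g (kappa - u))
       <= C * Rpower u theta) /\
    (* linear (C^1) extension to (-oo,0] and [kappa,+oo) *)
    (forall x, x <= 0 -> g x = Derive g 0 * x) /\
    (forall x, kappa <= x -> g x = kappa + Derive g kappa * (x - kappa)).

Definition chi (g : R -> R) (h z c : R) : R :=
  z ^ 2 - c * z - 1 + Derive g 0 * exp (- z * c * h).

Definition chi_z (g : R -> R) (h z c : R) : R :=
  2 * z - c - Derive g 0 * c * h * exp (- z * c * h).

Definition has_pos_double_zero (g : R -> R) (h c : R) : Prop :=
  exists z, 0 < z /\ chi g h z c = 0 /\ chi_z g h z c = 0.

Definition is_c_sharp (g : R -> R) (h cs : R) : Prop :=
  has_pos_double_zero g h cs /\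
  forall c', has_pos_double_zero g h c' -> c' = cs.

Definition are_lambdas (g : R -> R) (h c l1 l2 : R) : Prop :=
  0 < l1 /\ l1 < l2 /\ chi g h l1 c = 0 /\ chi g h l2 c = 0 /\
  (forall z, 0 < z -> chi g h z c = 0 -> z = l1 \/ z = l2).

(** Wavefront u(t,x) = phi(x + c t) of u_t = u_xx - u + g(u(t-h,x)):
    profile equation  phi'' - c phi' - phi + g(phi(s - c h)) = 0. *)
Definition is_wavefront (g : R -> R) (kappa h c : R) (phi : R -> R) : Prop :=
  (forall s, 0 < phi s) /\
  is_lim phi m_infty 0 /\ is_lim phi p_infty kappa /\
  (forall s, ex_derive phi s /\ ex_derive (Derive phi) s) /\
  (forall s, Derive_n phi 2 s - c * Derive phi s - phi s + g (phi (s - c * h)) = 0).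

Definition is_min_speed (g : R -> R) (kappa h cstar : R) : Prop :=
  (exists phi, is_wavefront g kappa h cstar phi) /\
  (forall c phi, is_wavefront g kappa h c phi -> cstar <= c).

Definition eta (lam z : R) : R := Rmin (exp (lam * z)) 1.

Definition is_solution (g : R -> R) (h c : R) (w : R -> R -> R) : Prop :=
  (forall t z, -h <= t -> forall eps, 0 < eps -> exists d, 0 < d /\
     forall t' z', -h <= t' -> Rabs (t' - t) < d -> Rabs (z' - z) < d ->
       Rabs (w t' z' - w t z) < eps) /\
  (forall t z, 0 < t ->
     ex_derive (fun s => w s z) t /\ ex_derive (fun y => w t y) z /\
     ex_derive (fun y => Derive (fun y' => w t y') y) z /\
     Derive (fun s => w s z) t =
       Derive_n (fun y => w t y) 2 z - c * Derive (fun y => w t y) z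
       - w t z + g (w (t - h) (z - c * h))).

Definition loc_holder_initial (h : R) (w : R -> R -> R) : Prop :=
  forall a b, a <= b -> exists C alpha, 0 <= C /\ 0 < alpha /\ alpha <= 1 /\
    forall s z1 z2, -h <= s <= 0 -> a <= z1 <= b -> a <= z2 <= b ->
      Rabs (w s z1 - w s z2) <= C * Rpower (Rabs (z1 - z2)) alpha.

(* Main.v *)
Require Import Defs.
From Stdlib Require Import Reals Lra Psatz ClassicalEpsilon Classical.
From Coquelicot Require Import Coquelicot.
Open Scope R_scope.


Lemma quot_mul (a hh : R) : hh <> 0 -> (a / hh) * hh = a.
Proof. intros; field; auto. Qed.

Lemma deriv_left_max (f : R -> R) t r : 0 < r -> ex_derive f t ->
  (forall s, t - r < s < t -> f s <= f t) -> 0 <= Derive f t.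
Proof.
  intros Hr Hd Hm. destruct (Rle_or_lt 0 (Derive f t)) as [H|H]; auto.
  exfalso. pose proof (Derive_correct _ _ Hd) as D. apply is_derive_Reals in D.
  destruct (D (- Derive f t / 2)) as [dl Hdl]; [lra|].
  set (hh := - Rmin dl r / 2).
  assert (Hmin : 0 < Rmin dl r) by (apply Rmin_pos; [apply cond_pos| lra]).
  assert (Hle1 : Rmin dl r <= dl) by apply Rmin_l.
  assert (Hle2 : Rmin dl r <= r) by apply Rmin_r.
  assert (hneg : hh < 0) by (unfold hh; lra).
  specialize (Hdl hh ltac:(lra) ltac:(unfold hh; rewrite Rabs_left; lra)).
  specialize (Hm (t + hh) ltac:(unfold hh; lra)).
  set (q := (f (t + hh) - f t) / hh) in *.
  assert (q * hh = f (t + hh) - f t) by (unfold q; apply quot_mul; lra).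
  apply Rabs_def2 in Hdl. nra.
Qed.

Lemma deriv_right_max (f : R -> R) t r : 0 < r -> ex_derive f t ->
  (forall s, t < s < t + r -> f s <= f t) -> Derive f t <= 0.
Proof.
  intros Hr Hd Hm. destruct (Rle_or_lt (Derive f t) 0) as [H|H]; auto.
  exfalso. pose proof (Derive_correct _ _ Hd) as D. apply is_derive_Reals in D.
  destruct (D (Derive f t / 2)) as [dl Hdl]; [lra|].
  set (hh := Rmin dl r / 2).
  assert (Hmin : 0 < Rmin dl r) by (apply Rmin_pos; [apply cond_pos| lra]).
  assert (Hle1 : Rmin dl r <= dl) by apply Rmin_l.
  assert (Hle2 : Rmin dl r <= r) by apply Rmin_r.
  assert (hpos : 0 < hh) by (unfold hh; lra).
  specialize (Hdl hh ltac:(lra) ltac:(unfold hh; rewrite Rabs_right; lra)).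
  specialize (Hm (t + hh) ltac:(unfold hh; lra)).
  set (q := (f (t + hh) - f t) / hh) in *.
  assert (q * hh = f (t + hh) - f t) by (unfold q; apply quot_mul; lra).
  apply Rabs_def2 in Hdl. nra.
Qed.

Lemma deriv_max0 (f : R -> R) t r : 0 < r -> ex_derive f t ->
  (forall s, Rabs (s - t) < r -> f s <= f t) -> Derive f t = 0.
Proof.
  intros Hr Hd Hm.
  assert (0 <= Derive f t).
  { apply (deriv_left_max f t r Hr Hd). intros s Hs. apply Hm. rewrite Rabs_left; lra. }
  assert (Derive f t <= 0).
  { apply (deriv_right_max f t r Hr Hd). intros s Hs. apply Hm. rewrite Rabs_right; lra. }
  lra.
Qed.

Lemma second_deriv_max (f : R -> R) z r : 0 < r -> (forall y, ex_derive f y) ->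
  ex_derive (Derive f) z ->
  (forall s, Rabs (s - z) < r -> f s <= f z) -> Derive (Derive f) z <= 0.
Proof.
  intros Hr Hd Hd2 Hm.
  assert (H0 : Derive f z = 0) by (apply (deriv_max0 f z r); auto).
  destruct (Rle_or_lt (Derive (Derive f) z) 0) as [H|H]; auto. exfalso.
  pose proof (Derive_correct _ _ Hd2) as D. apply is_derive_Reals in D.
  destruct (D (Derive (Derive f) z / 2)) as [dl Hdl]; [lra|].
  assert (Hpos : forall hh, 0 < hh < dl -> 0 < Derive f (z + hh)).
  { intros hh Hh. specialize (Hdl hh ltac:(lra) ltac:(rewrite Rabs_right; lra)).
    rewrite H0 in Hdl.
    set (q := (Derive f (z + hh) - 0) / hh) in *.
    assert (q * hh = Derive f (z + hh) - 0) by (unfold q; apply quot_mul; lra).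
    apply Rabs_def2 in Hdl. nra. }
  set (hh := Rmin dl r / 2).
  assert (Hmin : 0 < Rmin dl r) by (apply Rmin_pos; [apply cond_pos| lra]).
  assert (Hle1 : Rmin dl r <= dl) by apply Rmin_l.
  assert (Hle2 : Rmin dl r <= r) by apply Rmin_r.
  assert (Hder : forall c, derivable_pt_lim f c (Derive f c)).
  { intro c. apply is_derive_Reals, Derive_correct, Hd. }
  destruct (MVT_cor2 f (Derive f) (z + hh/2) (z + hh) ltac:(unfold hh; lra) (fun c _ => Hder c))
    as [c1 [E1 C1]].
  destruct (MVT_cor2 f (Derive f) z (z + hh/2) ltac:(unfold hh; lra) (fun c _ => Hder c))
    as [c2 [E2 C2]].
  assert (P1 : 0 < Derive f c1) by (replace c1 with (z + (c1 - z)) by ring; apply Hpos; unfold hh in *; lra).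
  assert (P2 : 0 <= Derive f c2).
  { replace c2 with (z + (c2 - z)) by ring; apply Rlt_le, Hpos; unfold hh in *; lra. }
  specialize (Hm (z + hh) ltac:(rewrite Rabs_right; unfold hh in *; lra)).
  assert (hh > 0) by (unfold hh; lra). nra.
Qed.


Definition cont2r (u : R -> R -> R) : Prop :=
  forall t z, 0 <= t -> forall eps, 0 < eps -> exists d, 0 < d /\
    forall t' z', 0 <= t' -> Rabs (t' - t) < d -> Rabs (z' - z) < d ->
      Rabs (u t' z' - u t z) < eps.

Lemma ex_derive_cpt f x : ex_derive f x -> continuity_pt f x.
Proof. intros H; apply continuity_pt_filterlim; exact (ex_derive_continuous f x H). Qed.

Lemma cont2r_minus u F : cont2r u -> (forall t z, continuity_2d_pt F t z) ->
  cont2r (fun t z => u t z - F t z).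
Proof.
  intros Hu HF t z Ht eps He.
  destruct (Hu t z Ht (eps/2) ltac:(lra)) as [d1 [Hd1 H1]].
  destruct (HF t z (mkposreal (eps/2) ltac:(lra))) as [d2 H2].
  exists (Rmin d1 d2). split. apply Rmin_pos; [lra|apply cond_pos].
  intros t' z' Ht' Ha Hb.
  assert (Rmin d1 d2 <= d1) by apply Rmin_l. assert (Rmin d1 d2 <= d2) by apply Rmin_r.
  specialize (H1 t' z' Ht' ltac:(lra) ltac:(lra)).
  specialize (H2 t' z' ltac:(lra) ltac:(lra)). simpl in H2.
  replace (u t' z' - F t' z' - (u t z - F t z)) with ((u t' z' - u t z) - (F t' z' - F t z)) by ring.
  eapply Rle_lt_trans. apply Rabs_triang. rewrite Rabs_Ropp. lra.
Qed.

Lemma abs_le_inv x m : Rabs x <= m -> -m <= x <= m.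
Proof. unfold Rabs; destruct Rcase_abs; lra. Qed.

Lemma exp_le x y : x <= y -> exp x <= exp y.
Proof. intros [H|H]; [apply Rlt_le, exp_increasing; auto| subst; lra]. Qed.

Lemma sg_abs sg x : sg = 1 \/ sg = -1 -> sg * x <= Rabs x /\ - Rabs x <= sg * x.
Proof. intros [->| ->]; split; unfold Rabs; destruct Rcase_abs; lra. Qed.

Lemma psi_cont eps K a t z :
  continuity_2d_pt (fun t z => eps * exp (K * t) * (1 + (z - a) ^ 2)) t z.
Proof.
  apply continuity_2d_pt_mult.
  - apply continuity_2d_pt_mult. apply continuity_2d_pt_const.
    apply (continuity_1d_2d_pt_comp exp (fun t _ => K * t)).
    + apply ex_derive_cpt. auto_derive. auto.
    + apply continuity_2d_pt_mult. apply continuity_2d_pt_const. apply continuity_2d_pt_id1.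
  - apply continuity_2d_pt_plus. apply continuity_2d_pt_const.
    simpl. apply continuity_2d_pt_mult.
    apply continuity_2d_pt_minus. apply continuity_2d_pt_id2. apply continuity_2d_pt_const.
    apply continuity_2d_pt_mult.
    apply continuity_2d_pt_minus. apply continuity_2d_pt_id2. apply continuity_2d_pt_const.
    apply continuity_2d_pt_const.
Qed.

Lemma small_inv d : 0 < d -> exists N : nat, forall p, (N <= p)%nat -> / (INR p + 1) < d.
Proof.
  intros Hd. destruct (archimed_cor1 d Hd) as [N [HN HN0]]. exists N. intros p Hp.
  apply le_INR in Hp. apply lt_0_INR in HN0.
  eapply Rle_lt_trans; [|apply HN]. apply Rinv_le_contravar; lra.
Qed.

Lemma cmp (u : R -> R -> R) (sg a c h L B : R) :
  sg = 1 \/ sg = -1 -> 0 <= h -> 0 <= L ->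
  cont2r u ->
  (forall t z, 0 <= t -> 0 <= sg * (z - a) -> u t z <= B) ->
  (forall z, 0 <= sg * (z - a) -> u 0 z <= 0) ->
  (forall t, 0 <= t -> u t a <= 0) ->
  (forall t z, 0 < t -> 0 < sg * (z - a) ->
     ex_derive (fun s => u s z) t /\ (forall y, ex_derive (fun y => u t y) y) /\
     ex_derive (Derive (fun y => u t y)) z /\
     Derive (fun s => u s z) t <=
       Derive (Derive (fun y => u t y)) z - c * Derive (fun y => u t y) z - u t z
       + L * Rmax 0 (u (t - h) (z - c * h))) ->
  (forall t z, 0 < t -> 0 < sg * (z - a) -> (t - h < 0 \/ sg * (z - c * h - a) <= 0) ->
     u (t - h) (z - c * h) <= 0) ->
  forall t z, 0 <= t -> 0 <= sg * (z - a) -> u t z <= 0.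
Proof.
  intros Hsg Hh HL Hcont Hbd Hinit Hbdry Hder Hdel t1 z1 Ht1 Hz1.
  destruct (Rle_or_lt (u t1 z1) 0) as [Hu1|Hu1]; auto. exfalso.
  set (K := 4 + c ^ 2 + L * (2 + 2 * c ^ 2 * h ^ 2)).
  assert (HK : 0 < K) by (unfold K; assert (0 <= c^2) by apply pow2_ge_0; assert (0 <= c^2*h^2) by (apply Rmult_le_pos; apply pow2_ge_0); assert (0 <= L*(2+2*c^2*h^2)) by (apply Rmult_le_pos; nra); lra).
  set (Y1 := 1 + (z1 - a) ^ 2).
  assert (HY1 : 0 < Y1) by (unfold Y1; pose proof (pow2_ge_0 (z1 - a)); lra).
  assert (He1 := exp_pos (K * t1)).
  set (eps := u t1 z1 / (2 * exp (K * t1) * Y1)).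
  assert (Heps : 0 < eps) by (unfold eps; apply Rdiv_lt_0_compat; nra).
  set (psi := fun t z => eps * exp (K * t) * (1 + (z - a) ^ 2)).
  set (W := fun t z => u t z - psi t z).
  assert (HW1 : 0 < W t1 z1).
  { unfold W, psi. fold Y1. unfold eps.
    replace (u t1 z1 / (2 * exp (K * t1) * Y1) * exp (K * t1) * Y1) with (u t1 z1 / 2)
      by (field; lra). lra. }
  assert (Hpsi_ge : forall t z, 0 <= t -> eps * (1 + (z - a) ^ 2) <= psi t z).
  { intros t z Ht. unfold psi. assert (1 <= exp (K * t)).
    { rewrite <- exp_0. apply exp_le. nra. }
    assert (0 <= (z - a) ^2) by apply pow2_ge_0.
    replace (eps * exp (K*t) * (1 + (z-a)^2)) with (exp (K*t) * (eps * (1 + (z-a)^2))) by ring.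
    assert (0 <= eps*(1+(z-a)^2)) by nra. nra. }
  set (M := Rmax B 0 / eps + 1).
  assert (HM1 : 1 <= M) by (unfold M; assert (0 <= Rmax B 0 / eps)
      by (apply Rdiv_le_0_compat; [apply Rmax_r|lra]); lra).
  assert (Hfar : forall t z, 0 <= t -> 0 <= sg * (z - a) -> M < Rabs (z - a) -> W t z < 0).
  { intros t z Ht Hz HMz. unfold W. specialize (Hbd t z Ht Hz). specialize (Hpsi_ge t z Ht).
    assert (B <= Rmax B 0) by apply Rmax_l.
    assert ((z - a) ^ 2 = Rabs (z - a) * Rabs (z - a)).
    { rewrite <- Rabs_mult. rewrite Rabs_right. ring. apply Rle_ge, Rle_0_sqr. }
    assert (eps * M = Rmax B 0 + eps) by (unfold M; field; lra).
    assert (Rabs (z - a) * Rabs (z - a) > M) by nra. nra. }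
  set (S := fun t => 0 <= t <= t1 /\ exists z, 0 <= sg * (z - a) /\ 0 < W t z).
  set (E := fun x => forall s, S s -> x <= s).
  assert (HS1 : S t1) by (split; [lra| exists z1; auto]).
  destruct (completeness E) as [tau [Hub Hlub]].
  { exists t1. intros x Hx. apply Hx, HS1. }
  { exists 0. intros s [Hs _]. lra. }
  assert (Htau0 : 0 <= tau) by (apply Hub; intros s [Hs _]; lra).
  assert (Htau1 : tau <= t1) by (apply Hlub; intros x Hx; apply Hx, HS1).
  assert (Hlow : forall s, S s -> tau <= s) by (intros s Hs; apply Hlub; intros x Hx; apply Hx, Hs).
  assert (Happ : forall et, 0 < et -> exists s, S s /\ s < tau + et).
  { intros et Het. apply NNPP. intro Hn.
    assert (E (tau + et)).
    { intros s Hs. destruct (Rle_or_lt (tau + et) s); auto. exfalso. apply Hn. exists s. auto. }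
    specialize (Hub _ H). lra. }
  assert (Hearly : forall t z, 0 <= t < tau -> 0 <= sg * (z - a) -> W t z <= 0).
  { intros t z Ht Hz. destruct (Rle_or_lt (W t z) 0); auto.
    assert (S t) by (split; [lra| exists z; auto]). specialize (Hlow _ H0). lra. }
  assert (HcW : cont2r W) by (apply cont2r_minus; auto; intros; apply psi_cont).
  assert (Hseq : forall n : nat, exists p : R * R,
     tau <= fst p < tau + / (INR n + 1) /\ 0 <= fst p /\ 0 <= sg * (snd p - a) /\
     0 < W (fst p) (snd p)).
  { intro n. assert (0 < / (INR n + 1)) by (apply Rinv_0_lt_compat; pose proof (pos_INR n); lra).
    destruct (Happ _ H) as [s [[Hs0 [z [Hz HWz]]] Hs1]].
    exists (s, z). simpl. assert (tau <= s) by (apply Hlow; split; [lra| exists z; auto]).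
    repeat split; auto; lra. }
  set (sq := fun n => proj1_sig (constructive_indefinite_description _ (Hseq n))).
  assert (Hsq : forall n, tau <= fst (sq n) < tau + / (INR n + 1) /\ 0 <= fst (sq n) /\
     0 <= sg * (snd (sq n) - a) /\ 0 < W (fst (sq n)) (snd (sq n))).
  { intro n. unfold sq. apply proj2_sig. }
  assert (HX : forall n, a - M <= snd (sq n) <= a + M).
  { intro n. destruct (Hsq n) as [_ [Ht [Hz HWz]]].
    destruct (Rle_or_lt (Rabs (snd (sq n) - a)) M) as [Hl|Hl].
    - apply abs_le_inv in Hl. lra.
    - specialize (Hfar _ _ Ht Hz Hl). lra. }
  destruct (Bolzano_Weierstrass (fun n => snd (sq n)) _ (compact_P3 (a - M) (a + M)) HX)
    as [zs Hzs].
  assert (Hadh : forall d, 0 < d -> forall N, exists p, (N <= p)%nat /\ Rabs (snd (sq p) - zs) < d).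
  { intros d Hd N.
    assert (Hn : neighbourhood (disc zs (mkposreal d Hd)) zs).
    { exists (mkposreal d Hd). intros x Hx. exact Hx. }
    destruct (Hzs _ N Hn) as [p [Hp Hin]].
    exists p. split; auto. }
  assert (HzsD : 0 <= sg * (zs - a)).
  { destruct (Rle_or_lt 0 (sg * (zs - a))) as [H|H]; auto. exfalso.
    destruct (Hadh (- (sg * (zs - a))) ltac:(lra) 0%nat) as [p [_ Hp]].
    destruct (Hsq p) as [_ [_ [Hz _]]].
    destruct (sg_abs sg (snd (sq p) - zs) Hsg) as [A1 A2].
    replace (sg * (snd (sq p) - a)) with (sg * (snd (sq p) - zs) + sg * (zs - a)) in Hz by ring.
    lra. }
  assert (HWge : 0 <= W tau zs).
  { destruct (Rle_or_lt 0 (W tau zs)) as [H|H]; auto. exfalso.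
    destruct (HcW tau zs Htau0 (- W tau zs) ltac:(lra)) as [d [Hd Hc]].
    destruct (small_inv d Hd) as [N HN].
    destruct (Hadh d Hd N) as [p [Hp Hzp]].
    destruct (Hsq p) as [[Hs0 Hs1] [Ht [_ HWp]]].
    specialize (HN p Hp).
    specialize (Hc _ _ Ht ltac:(rewrite Rabs_right; lra) Hzp).
    apply Rabs_def2 in Hc. lra. }
  assert (Htaup : 0 < tau).
  { destruct Htau0 as [H|H]; auto. exfalso. subst tau.
    specialize (Hinit zs HzsD). specialize (Hpsi_ge 0 zs (Rle_refl 0)).
    unfold W in HWge. assert (0 <= (zs - a) ^2) by apply pow2_ge_0. nra. }
  assert (Htau_le : forall z, 0 <= sg * (z - a) -> W tau z <= 0).
  { intros z Hz. destruct (Rle_or_lt (W tau z) 0) as [H|H]; auto. exfalso.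
    destruct (HcW tau z Htau0 (W tau z) H) as [d [Hd Hc]].
    set (t := Rmax 0 (tau - d / 2)).
    assert (0 <= t) by apply Rmax_l. assert (tau - d/2 <= t) by apply Rmax_r.
    assert (t < tau) by (unfold t; apply Rmax_lub_lt; lra).
    specialize (Hc t z H0 ltac:(rewrite Rabs_left; lra) ltac:(rewrite Rminus_diag, Rabs_R0; lra)).
    specialize (Hearly t z ltac:(lra) Hz). apply Rabs_def2 in Hc. lra. }
  assert (HW0 : W tau zs = 0) by (specialize (Htau_le zs HzsD); lra).
  assert (Hzsa : 0 < sg * (zs - a)).
  { destruct HzsD as [H|H]; auto. exfalso.
    assert (zs = a) by (destruct Hsg as [-> | ->]; lra). subst zs.
    specialize (Hbdry tau Htau0). specialize (Hpsi_ge tau a Htau0).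
    unfold W in HW0. replace ((a - a) ^ 2) with 0 in Hpsi_ge by ring. nra. }
  destruct (Hder tau zs Htaup Hzsa) as [Dt [Dz [Dzz Hpde]]].
  set (P := eps * exp (K * tau)).
  assert (HP : 0 < P) by (unfold P; apply Rmult_lt_0_compat; auto; apply exp_pos).
  set (y := zs - a).
  assert (Hu0 : u tau zs = P * (1 + y ^ 2)) by (unfold W, psi in HW0; unfold P, y; lra).
  assert (Hpt : forall z, is_derive (fun s => psi s z) tau (K * psi tau z)).
  { intro z. unfold psi. auto_derive; auto. ring. }
  assert (Hut : K * (P * (1 + y ^ 2)) <= Derive (fun s => u s zs) tau).
  { assert (HD : ex_derive (fun s => W s zs) tau).
    { unfold W. apply (ex_derive_minus (fun s => u s zs) (fun s => psi s zs)); auto.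
      eexists; apply Hpt. }
    pose proof (deriv_left_max (fun s => W s zs) tau tau Htaup HD) as Hl.
    assert (Hd0 : 0 <= Derive (fun s => W s zs) tau).
    { apply Hl. intros s Hs. rewrite HW0. apply Hearly; auto; lra. }
    unfold W in Hd0. rewrite Derive_minus in Hd0; auto; [|eexists; apply Hpt].
    assert (Hpd : Derive (fun s => psi s zs) tau = K * psi tau zs) by (apply is_derive_unique; apply Hpt).
    rewrite Hpd in Hd0.
    unfold psi in Hd0. fold y in Hd0. unfold P. lra. }
  assert (Hpz : forall t y0, is_derive (fun z => psi t z) y0 (eps * exp (K * t) * (2 * (y0 - a)))).
  { intros t y0. unfold psi. auto_derive; auto. ring. }
  assert (HDg : forall y0, Derive (fun z => W tau z) y0 =
      Derive (fun y => u tau y) y0 - eps * exp (K * tau) * (2 * (y0 - a))).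
  { intro y0. unfold W. rewrite Derive_minus; auto; [|eexists; apply Hpz].
    assert (Hq : Derive (psi tau) y0 = eps * exp (K * tau) * (2 * (y0 - a))) by (apply is_derive_unique; apply Hpz).
    rewrite Hq. reflexivity. }
  assert (Hexg : forall y0, ex_derive (fun z => W tau z) y0).
  { intro y0. unfold W. apply (ex_derive_minus (fun z => u tau z) (fun z => psi tau z)); auto.
    eexists; apply Hpz. }
  assert (Hpz2 : is_derive (fun y0 => eps * exp (K * tau) * (2 * (y0 - a))) zs (eps * exp (K * tau) * 2)).
  { auto_derive; auto. ring. }
  assert (Hexg2 : ex_derive (Derive (fun z => W tau z)) zs).
  { apply (ex_derive_ext (fun y0 => Derive (fun y => u tau y) y0 - eps * exp (K * tau) * (2 * (y0 - a)))).
    intro; symmetry; apply HDg.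
    apply (ex_derive_minus (Derive (fun y => u tau y)) (fun y0 => eps * exp (K * tau) * (2 * (y0 - a)))); auto.
    eexists; apply Hpz2. }
  set (r := sg * (zs - a)).
  assert (Hnear : forall s, Rabs (s - zs) < r -> W tau s <= W tau zs).
  { intros s Hs. rewrite HW0. apply Htau_le.
    destruct (sg_abs sg (s - zs) Hsg) as [A1 A2].
    replace (sg * (s - a)) with (sg * (s - zs) + sg * (zs - a)) by ring. unfold r in Hs. lra. }
  pose proof (deriv_max0 (fun z => W tau z) zs r Hzsa (Hexg zs) Hnear) as Hz0.
  pose proof (second_deriv_max (fun z => W tau z) zs r Hzsa Hexg Hexg2 Hnear) as Hz2.
  rewrite HDg in Hz0.
  rewrite (Derive_ext _ _ _ HDg) in Hz2.
  rewrite Derive_minus in Hz2; auto; [|eexists; apply Hpz2].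
  assert (Hq2 : Derive (fun y0 => eps * exp (K * tau) * (2 * (y0 - a))) zs = eps * exp (K * tau) * 2) by (apply is_derive_unique; apply Hpz2).
  rewrite Hq2 in Hz2.
  assert (Huz : Derive (fun y => u tau y) zs = P * (2 * y)) by (unfold P, y; lra).
  assert (Huzz : Derive (Derive (fun y => u tau y)) zs <= P * 2) by (unfold P; lra).
  set (Cd := 2 + 2 * c ^ 2 * h ^ 2).
  assert (Hdel2 : Rmax 0 (u (tau - h) (zs - c * h)) <= P * Cd * (1 + y ^ 2)).
  { assert (0 <= P * Cd * (1 + y ^ 2)) by (unfold Cd; assert (0 <= y^2) by apply pow2_ge_0;
      assert (0 <= c^2*h^2) by (apply Rmult_le_pos; apply pow2_ge_0);
      apply Rmult_le_pos; [apply Rmult_le_pos|]; lra).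
    apply Rmax_lub; auto.
    destruct (classic (tau - h < 0 \/ sg * (zs - c * h - a) <= 0)) as [Hc|Hc].
    - specialize (Hdel tau zs Htaup Hzsa Hc). lra.
    - apply not_or_and in Hc. destruct Hc as [Hc1 Hc2].
      apply Rnot_lt_le in Hc1. apply Rnot_le_lt in Hc2.
      assert (W (tau - h) (zs - c * h) <= 0).
      { destruct Hh as [Hh|Hh].
        - apply Hearly; lra.
        - subst h. replace (tau - 0) with tau by ring. apply Htau_le. lra. }
      unfold W, psi in H0.
      assert (exp (K * (tau - h)) <= exp (K * tau)) by (apply exp_le; nra).
      assert (1 + (zs - c * h - a) ^ 2 <= Cd * (1 + y ^ 2)).
      { unfold Cd. replace (zs - c * h - a) with (y - c * h) by (unfold y; ring).
        pose proof (pow2_ge_0 (y + c * h)). pose proof (pow2_ge_0 (c * h * y)). nra. }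
      assert (0 < exp (K * (tau - h))) by apply exp_pos.
      assert (0 <= (zs - c * h - a) ^2) by apply pow2_ge_0.
      unfold P.
      assert (eps * exp (K * (tau - h)) * (1 + (zs - c * h - a) ^ 2) <=
              eps * exp (K * tau) * (Cd * (1 + y ^ 2))).
      { apply Rmult_le_compat; try nra. }
      nra. }
  rewrite Hu0, Huz in Hpde.
  assert (HLd : L * Rmax 0 (u (tau - h) (zs - c * h)) <= L * (P * Cd * (1 + y ^ 2)))
    by (apply Rmult_le_compat_l; auto).
  assert (Hfin : K * (P * (1 + y ^ 2)) <=
     P * 2 - c * (P * (2 * y)) - P * (1 + y ^ 2) + L * (P * Cd * (1 + y ^ 2))) by lra.
  assert (Hq : K * (1 + y ^ 2) <= 2 - c * (2 * y) - (1 + y ^ 2) + L * (Cd * (1 + y ^ 2))).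
  { apply (Rmult_le_reg_l P); auto. nra. }
  unfold K, Cd in Hq. assert (0 <= L * (2 + 2 * c ^ 2 * h ^ 2) * y ^ 2) by
    (apply Rmult_le_pos; [apply Rmult_le_pos; nra| nra]).
  nra.
Qed.


Lemma g_lip (g : R -> R) kappa :
  (forall x y, x <= y -> g x <= g y) -> hyp_H g kappa ->
  exists L, 0 <= L /\ forall x y, g x - g y <= L * Rmax 0 (x - y).
Proof.
  intros Hmono [Hk [Hg0 [Hgk [_ [d0 [Lg [C [th [_ [_ [_ [_ [_ [_ [_ [_ [HLip [_ [Hl0 Hlk]]]]]]]]]]]]]]]]]]].
  set (D0 := Derive g 0) in *. set (Dk := Derive g kappa) in *.
  set (p := fun x => Rmin (Rmax x 0) kappa).
  assert (Hp : forall x, 0 <= p x <= kappa).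
  { intro x. unfold p, Rmin, Rmax. repeat destruct Rle_dec; lra. }
  assert (Hdec : forall x, g x = g (p x) + D0 * Rmin x 0 + Dk * Rmax (x - kappa) 0).
  { intro x. unfold p. destruct (Rle_dec x 0) as [H1|H1].
    - rewrite Hl0 by auto. replace (Rmin (Rmax x 0) kappa) with 0.
      rewrite Hg0. rewrite Rmin_left by auto. rewrite Rmax_right by lra. ring.
      unfold Rmin, Rmax; repeat destruct Rle_dec; lra.
    - destruct (Rle_dec x kappa) as [H2|H2].
      + replace (Rmin (Rmax x 0) kappa) with x by (unfold Rmin, Rmax; repeat destruct Rle_dec; lra).
        rewrite Rmin_right by lra. rewrite Rmax_right by lra. ring.
      + rewrite (Hlk x) by lra.
        replace (Rmin (Rmax x 0) kappa) with kappa by (unfold Rmin, Rmax; repeat destruct Rle_dec; lra).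
        rewrite Hgk. rewrite Rmin_right by lra. rewrite Rmax_left by lra. ring. }
  exists (Rabs Lg + Rabs D0 + Rabs Dk). split.
  { pose proof (Rabs_pos Lg); pose proof (Rabs_pos D0); pose proof (Rabs_pos Dk); lra. }
  intros x y. destruct (Rle_or_lt y x) as [Hxy|Hxy].
  - rewrite Rmax_right by lra.
    rewrite (Hdec x), (Hdec y).
    assert (A1 : Rabs (p x - p y) <= x - y).
    { unfold p, Rmin, Rmax. repeat destruct Rle_dec; unfold Rabs; destruct Rcase_abs; lra. }
    assert (A2 : Rabs (Rmin x 0 - Rmin y 0) <= x - y).
    { unfold Rmin. repeat destruct Rle_dec; unfold Rabs; destruct Rcase_abs; lra. }
    assert (A3 : Rabs (Rmax (x - kappa) 0 - Rmax (y - kappa) 0) <= x - y).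
    { unfold Rmax. repeat destruct Rle_dec; unfold Rabs; destruct Rcase_abs; lra. }
    specialize (HLip (p x) (p y) (Hp x) (Hp y)).
    assert (B1 : g (p x) - g (p y) <= Rabs Lg * (x - y)).
    { eapply Rle_trans. apply Rle_abs. eapply Rle_trans. apply HLip.
      eapply Rle_trans. apply Rmult_le_compat_r. apply Rabs_pos. apply Rle_abs.
      apply Rmult_le_compat_l. apply Rabs_pos. auto. }
    assert (B2 : D0 * (Rmin x 0 - Rmin y 0) <= Rabs D0 * (x - y)).
    { eapply Rle_trans. apply Rle_abs. rewrite Rabs_mult.
      apply Rmult_le_compat_l. apply Rabs_pos. auto. }
    assert (B3 : Dk * (Rmax (x - kappa) 0 - Rmax (y - kappa) 0) <= Rabs Dk * (x - y)).
    { eapply Rle_trans. apply Rle_abs. rewrite Rabs_mult.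
      apply Rmult_le_compat_l. apply Rabs_pos. auto. }
    nra.
  - rewrite Rmax_left by lra. specialize (Hmono x y ltac:(lra)). lra.
Qed.


Lemma rpow_small C th rho u : 0 < C -> 0 < th -> 0 < rho -> 0 < u ->
  u <= Rpower (rho / C) (/ th) -> C * Rpower u th <= rho.
Proof.
  intros HC Hth Hr Hu Hle.
  assert (Rpower u th <= Rpower (Rpower (rho / C) (/ th)) th).
  { apply Rle_Rpower_l; lra. }
  rewrite Rpower_mult in H. replace (/ th * th) with 1 in H by (field; lra).
  rewrite Rpower_1 in H by (apply Rdiv_lt_0_compat; lra).
  apply (Rmult_le_compat_l C) in H; [|lra].
  replace (C * (rho / C)) with rho in H by (field; lra). auto.
Qed.

Lemma rpow_pos x y : 0 < Rpower x y.
Proof. unfold Rpower; apply exp_pos. Qed.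

Lemma mvt_bound (g : R -> R) a s D :
  0 <= s ->
  (forall x, a <= x <= a + s -> ex_derive g x) ->
  (forall x, a < x < a + s -> Derive g x <= D) ->
  g (a + s) - g a <= D * s.
Proof.
  intros Hs Hd Hb. destruct Hs as [Hs|Hs].
  - destruct (MVT_cor2 g (Derive g) a (a + s) ltac:(lra)) as [x [Ex Hx]].
    { intros x Hx. apply is_derive_Reals, Derive_correct, Hd; auto. }
    rewrite Ex. replace (a + s - a) with s by ring.
    apply Rmult_le_compat_r; [lra|]. apply Hb; auto.
  - subst s. replace (a + 0) with a by ring. lra.
Qed.

Lemma g_left (g : R -> R) kappa : hyp_H g kappa ->
  forall rho, 0 < rho -> exists b, 0 < b /\ forall a s, 0 <= a -> 0 <= s -> a + s <= b ->
    g (a + s) - g a <= (Derive g 0 + rho) * s.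
Proof.
  intros [Hk [Hg0 [Hgk [_ [d0 [Lg [C [th [Hd0 [HC [Hth [Hth1 [Hde0 [Hdek [_ [_ [_ [Hhol _]]]]]]]]]]]]]]]]]] rho Hr.
  exists (Rmin (d0 / 2) (Rpower (rho / C) (/ th))). split.
  { apply Rmin_pos. lra. apply rpow_pos. }
  intros a s Ha Hs Has.
  assert (Hm1 := Rmin_l (d0 / 2) (Rpower (rho / C) (/ th))).
  assert (Hm2 := Rmin_r (d0 / 2) (Rpower (rho / C) (/ th))).
  apply mvt_bound; auto.
  - intros x Hx. apply Hde0. unfold Rabs; destruct Rcase_abs; lra.
  - intros x Hx. specialize (Hhol x ltac:(lra)).
    assert (C * Rpower x th <= rho) by (apply rpow_small; auto; lra).
    assert (Rabs (Derive g x - Derive g 0) <= rho).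
    { pose proof (Rabs_pos (Derive g kappa - Derive g (kappa - x))). lra. }
    unfold Rabs in H0; destruct Rcase_abs in H0; lra.
Qed.

Lemma g_right (g : R -> R) kappa : hyp_H g kappa ->
  forall rho, 0 < rho -> exists b, 0 < b /\ forall a s, kappa - b <= a -> 0 <= s -> a + s <= kappa + b ->
    g (a + s) - g a <= (Derive g kappa + rho) * s.
Proof.
  intros [Hk [Hg0 [Hgk [_ [d0 [Lg [C [th [Hd0 [HC [Hth [Hth1 [Hde0 [Hdek [_ [_ [_ [Hhol [_ Hlk]]]]]]]]]]]]]]]]]]] rho Hr.
  exists (Rmin (d0 / 2) (Rpower (rho / C) (/ th))). split.
  { apply Rmin_pos. lra. apply rpow_pos. }
  intros a s Ha Hs Has.
  assert (Hm1 := Rmin_l (d0 / 2) (Rpower (rho / C) (/ th))).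
  assert (Hm2 := Rmin_r (d0 / 2) (Rpower (rho / C) (/ th))).
  apply mvt_bound; auto.
  - intros x Hx. apply Hdek. unfold Rabs; destruct Rcase_abs; lra.
  - intros x Hx. destruct (Rlt_or_le x kappa) as [Hxk|Hxk].
    + specialize (Hhol (kappa - x) ltac:(lra)).
      replace (kappa - (kappa - x)) with x in Hhol by ring.
      assert (C * Rpower (kappa - x) th <= rho) by (apply rpow_small; auto; lra).
      assert (Rabs (Derive g kappa - Derive g x) <= rho).
      { pose proof (Rabs_pos (Derive g (kappa - x) - Derive g 0)). lra. }
      unfold Rabs in H0; destruct Rcase_abs in H0; lra.
    + destruct Hxk as [Hxk| <-]; [|lra].
      assert (Derive g x = Derive (fun y => kappa + Derive g kappa * (y - kappa)) x).
      { apply Derive_ext_loc. apply (locally_interval _ x kappa p_infty); simpl; auto.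
        intros y Hy _. apply Hlk. simpl in Hy. lra. }
      rewrite H. rewrite (is_derive_unique _ _ (Derive g kappa)). lra.
      auto_derive; auto. ring.
Qed.


Lemma c_pos g kappa h cs c : hyp_H g kappa -> 0 <= h -> is_c_sharp g h cs -> cs < c -> 0 < cs.
Proof.
  intros HH Hh [[z [Hz [_ Hcz]]] _] _.
  destruct HH as [_ [_ [_ [_ [d0 [Lg [C [th [_ [_ [_ [_ [_ [_ [H1 _]]]]]]]]]]]]]]].
  unfold chi_z in Hcz.
  assert (0 < exp (- z * cs * h)) by apply exp_pos.
  set (A := Derive g 0 * h * exp (- z * cs * h)).
  assert (0 <= A) by (unfold A; apply Rmult_le_pos; [apply Rmult_le_pos|]; lra).
  assert (cs * (1 + A) = 2 * z) by (unfold A; lra).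
  nra.
Qed.

Lemma exp_tangent p q : exp p * (1 + (q - p)) <= exp q.
Proof.
  pose proof (exp_ineq1_le (q - p)). pose proof (exp_pos p).
  replace (exp q) with (exp p * exp (q - p)) by (rewrite <- exp_plus; f_equal; ring).
  apply Rmult_le_compat_l; lra.
Qed.

Lemma chi_neg g kappa h c l1 l2 lam : hyp_H g kappa ->
  are_lambdas g h c l1 l2 -> l1 < lam < l2 -> chi g h lam c < 0.
Proof.
  intros HH [Hl1 [Hl12 [C1 [C2 Hz]]]] Hlam.
  destruct HH as [_ [_ [_ [_ [d0 [Lg [C [th [_ [_ [_ [_ [_ [_ [H1 _]]]]]]]]]]]]]]].
  destruct (Rle_or_lt 0 (chi g h lam c)) as [H|H]; auto. exfalso.
  destruct H as [H|H].
  - set (s := (lam - l1) / (l2 - l1)).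
    assert (Hs : 0 < s < 1) by (unfold s; split;
      [apply Rdiv_lt_0_compat; lra | apply (Rmult_lt_reg_r (l2 - l1)); [lra|]; field_simplify; lra]).
    assert (Hlm : lam = (1 - s) * l1 + s * l2) by (unfold s; field; lra).
    unfold chi in *.
    set (p := - lam * c * h). set (q1 := - l1 * c * h). set (q2 := - l2 * c * h).
    assert (Hp : p = (1 - s) * q1 + s * q2) by (unfold p, q1, q2; rewrite Hlm; ring).
    pose proof (exp_tangent p q1). pose proof (exp_tangent p q2).
    assert (Hex : exp p <= (1 - s) * exp q1 + s * exp q2).
    { assert (E1 : (1 - s) * (exp p * (1 + (q1 - p))) <= (1 - s) * exp q1) by (apply Rmult_le_compat_l; lra).
      assert (E2 : s * (exp p * (1 + (q2 - p))) <= s * exp q2) by (apply Rmult_le_compat_l; lra).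
      assert (E3 : (1 - s) * (exp p * (1 + (q1 - p))) + s * (exp p * (1 + (q2 - p))) = exp p)
        by (rewrite Hp; ring).
      lra. }
    assert (Hq : (1 - s) * l1 ^ 2 + s * l2 ^ 2 - lam ^ 2 = s * (1 - s) * (l2 - l1) ^ 2)
      by (rewrite Hlm; ring).
    assert (0 <= s * (1 - s) * (l2 - l1) ^ 2)
      by (apply Rmult_le_pos; [nra| apply pow2_ge_0]).
    assert (Derive g 0 * exp p <= Derive g 0 * ((1 - s) * exp q1 + s * exp q2))
      by (apply Rmult_le_compat_l; lra).
    assert ((1 - s) * (l1 ^ 2 - c * l1 - 1 + Derive g 0 * exp q1) +
            s * (l2 ^ 2 - c * l2 - 1 + Derive g 0 * exp q2) = 0) by (unfold q1, q2; rewrite C1, C2; ring).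
    assert (lam ^ 2 - c * lam - 1 + Derive g 0 * exp p <= 0).
    { assert (Hc : c * lam = (1 - s) * (c * l1) + s * (c * l2)) by (rewrite Hlm; ring).
      lra. }
    unfold p in *. lra.
  - destruct (Hz lam ltac:(lra) (eq_sym H)); lra.
Qed.


Lemma u_deriv (g : R -> R) (w Phi Phit Phiz Phizz : R -> R -> R) c h L t z :
  ex_derive (fun s => w s z) t ->
  (forall y, ex_derive (fun y => w t y) y) ->
  ex_derive (fun y => Derive (fun y' => w t y') y) z ->
  Derive (fun s => w s z) t =
    Derive_n (fun y => w t y) 2 z - c * Derive (fun y => w t y) z - w t z + g (w (t - h) (z - c * h)) ->
  is_derive (fun s => Phi s z) t (Phit t z) ->
  (forall y, is_derive (fun y => Phi t y) y (Phiz t y)) ->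
  is_derive (fun y => Phiz t y) z (Phizz t z) ->
  (forall x y, g x - g y <= L * Rmax 0 (x - y)) ->
  Phizz t z - c * Phiz t z - Phi t z + g (Phi (t - h) (z - c * h)) <= Phit t z ->
  ex_derive (fun s => w s z - Phi s z) t /\ (forall y, ex_derive (fun y => w t y - Phi t y) y) /\
  ex_derive (Derive (fun y => w t y - Phi t y)) z /\
  Derive (fun s => w s z - Phi s z) t <=
    Derive (Derive (fun y => w t y - Phi t y)) z - c * Derive (fun y => w t y - Phi t y) z
    - (w t z - Phi t z) + L * Rmax 0 (w (t - h) (z - c * h) - Phi (t - h) (z - c * h)).
Proof.
  intros Wt Wz Wzz Hpde Pt Pz Pzz Hlip Hsup.
  assert (HD1 : forall y, Derive (fun y => w t y - Phi t y) y = Derive (fun y => w t y) y - Phiz t y).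
  { intro y. rewrite Derive_minus; auto; [|eexists; apply Pz].
    f_equal. apply is_derive_unique; apply Pz. }
  assert (Hex2 : ex_derive (fun y => Derive (fun y' => w t y') y - Phiz t y) z).
  { apply (ex_derive_minus (fun y => Derive (fun y' => w t y') y) (fun y => Phiz t y)); auto.
    eexists; apply Pzz. }
  split; [|split; [|split]].
  - apply (ex_derive_minus (fun s => w s z) (fun s => Phi s z)); auto. eexists; apply Pt.
  - intro y. apply (ex_derive_minus (fun y => w t y) (fun y => Phi t y)); auto. eexists; apply Pz.
  - apply (ex_derive_ext (fun y => Derive (fun y' => w t y') y - Phiz t y)).
    + intro; symmetry; apply HD1.
    + exact Hex2.
  - assert (E1 : Derive (fun s => w s z - Phi s z) t = Derive (fun s => w s z) t - Phit t z).
    { rewrite Derive_minus; auto; [|eexists; apply Pt]. f_equal. apply is_derive_unique; apply Pt. }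
    assert (E2 : Derive (Derive (fun y => w t y - Phi t y)) z =
                 Derive (fun y => Derive (fun y' => w t y') y) z - Phizz t z).
    { rewrite (Derive_ext _ _ _ HD1).
      rewrite Derive_minus; auto; [|eexists; apply Pzz]. f_equal. apply is_derive_unique; apply Pzz. }
    rewrite E1, E2, HD1, Hpde. simpl.
    specialize (Hlip (w (t - h) (z - c * h)) (Phi (t - h) (z - c * h))).
    lra.
Qed.


Lemma cont_phiL (phi : R -> R) delta lam gamma t z :
  (forall x, ex_derive phi x) ->
  continuity_2d_pt (fun t z => phi z + delta * (exp (lam * z) * exp (- gamma * t))) t z.
Proof.
  intros Hd. apply continuity_2d_pt_plus.
  - apply (continuity_1d_2d_pt_comp phi (fun _ z => z)). apply ex_derive_cpt, Hd.
    apply continuity_2d_pt_id2.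
  - apply continuity_2d_pt_mult. apply continuity_2d_pt_const.
    apply continuity_2d_pt_mult.
    + apply (continuity_1d_2d_pt_comp exp (fun _ z => lam * z)).
      apply ex_derive_cpt. auto_derive; auto.
      apply continuity_2d_pt_mult. apply continuity_2d_pt_const. apply continuity_2d_pt_id2.
    + apply (continuity_1d_2d_pt_comp exp (fun t _ => - gamma * t)).
      apply ex_derive_cpt. auto_derive; auto.
      apply continuity_2d_pt_mult. apply continuity_2d_pt_const. apply continuity_2d_pt_id1.
Qed.

Lemma cont_phiR (phi : R -> R) delta gamma t z :
  (forall x, ex_derive phi x) ->
  continuity_2d_pt (fun t z => phi z + delta * exp (- gamma * t)) t z.
Proof.
  intros Hd. apply continuity_2d_pt_plus.
  - apply (continuity_1d_2d_pt_comp phi (fun _ z => z)). apply ex_derive_cpt, Hd.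
    apply continuity_2d_pt_id2.
  - apply continuity_2d_pt_mult. apply continuity_2d_pt_const.
    apply (continuity_1d_2d_pt_comp exp (fun t _ => - gamma * t)).
    apply ex_derive_cpt. auto_derive; auto.
    apply continuity_2d_pt_mult. apply continuity_2d_pt_const. apply continuity_2d_pt_id1.
Qed.

Lemma exp_le1 x : x <= 0 -> exp x <= 1.
Proof. intros; rewrite <- exp_0; apply exp_le; auto. Qed.
Lemma exp_ge1 x : 0 <= x -> 1 <= exp x.
Proof. intros; rewrite <- exp_0; apply exp_le; auto. Qed.


Theorem lemma2 (g : R -> R) (kappa h c cs l1 l2 lam : R) (phi : R -> R) :
  (forall x y, x <= y -> g x <= g y) ->
  hyp_H g kappa ->
  0 <= h ->
  is_wavefront g kappa h c phi ->
  is_min_speed g kappa h c ->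
  is_c_sharp g h cs ->
  cs < c ->
  are_lambdas g h c l1 l2 ->
  l1 < lam < l2 ->
  exists gamma delta, 0 < gamma /\ 0 < delta /\
    forall (w : R -> R -> R) (Rr : R),
      is_solution g h c w ->
      (forall s z, -h <= s <= 0 -> 0 <= w s z <= kappa) ->
      loc_holder_initial h w ->
      c * h < Rr ->
      (forall t z, -h <= t -> z <= - Rr + c * h ->
         0 <= w t z <= delta /\ 0 <= phi z <= delta) ->
      (forall t z, -h <= t -> Rr - c * h <= z ->
         Rabs (w t z - kappa) < delta /\ Rabs (phi z - kappa) < delta) ->
      (forall s z, -h <= s <= 0 -> w s z <= phi z + delta * eta lam z) ->
      (forall t z, 0 <= t -> - Rr - c * h <= z <= Rr + c * h -> w t z <= phi z) ->
      forall t z, 0 <= t -> w t z <= phi z + delta * eta lam z * exp (- gamma * t).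
Proof.
  intros Hmono HH Hh Hwf Hmin Hcs Hcsc Hlams Hlam.
  assert (Hcs0 := c_pos g kappa h cs c HH Hh Hcs Hcsc).
  assert (Hc : 0 < c) by lra.
  assert (Hchi := chi_neg g kappa h c l1 l2 lam HH Hlams Hlam).
  assert (Hlam0 : 0 < lam) by (destruct Hlams; lra).
  destruct (g_lip g kappa Hmono HH) as [L [HL Hlip]].
  pose proof HH as HH2.
  destruct HH2 as [Hk [_ [_ [_ [d0 [Lg [C [th [_ [_ [_ [_ [_ [_ [HD0 [HDk _]]]]]]]]]]]]]]]].
  destruct Hwf as [Hphi_pos [_ [_ [Hphi_d Hprof]]]].
  set (D0 := Derive g 0) in *. set (Dk := Derive g kappa) in *.
  set (Ex := exp (- lam * c * h)).
  assert (HEx : 0 < Ex) by apply exp_pos.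
  assert (HEx1 : Ex <= 1) by (apply exp_le1; assert (0 <= lam * c * h) by
     (apply Rmult_le_pos; [apply Rmult_le_pos|]; lra); lra).
  set (A := D0 * Ex).
  assert (HA : 0 < A) by (unfold A; apply Rmult_lt_0_compat; lra).
  set (m := - chi g h lam c).
  assert (Hm : 0 < m) by (unfold m; lra).
  assert (Hchi_eq : lam ^ 2 - c * lam - 1 = - A - m) by (unfold m, A, Ex, chi, D0; ring).
  set (m2 := 1 - Dk).
  assert (Hm2 : 0 < m2) by (unfold m2; lra).
  set (rho := m / (4 * Ex)).
  assert (Hrho : 0 < rho) by (unfold rho; apply Rdiv_lt_0_compat; lra).
  destruct (g_left g kappa HH rho Hrho) as [bL [HbL HgL]].
  destruct (g_right g kappa HH (m2 / 4) ltac:(lra)) as [bR [HbR HgR]].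
  fold D0 in HgL. fold Dk in HgR.
  set (B' := Dk + m2 / 4).
  set (q := Rmin 1 (Rmin ((m / 2) / (A + m / 4 + 1)) ((m2 / 2) / (Rabs B' + 1)))).
  assert (Hq : 0 < q <= 1 /\ (A + m / 4) * q <= m / 2 /\ Rabs B' * q <= m2 / 2).
  { pose proof (Rabs_pos B').
    assert (P1 : 0 < (m / 2) / (A + m / 4 + 1)) by (apply Rdiv_lt_0_compat; lra).
    assert (P2 : 0 < (m2 / 2) / (Rabs B' + 1)) by (apply Rdiv_lt_0_compat; lra).
    assert (Q1 := Rmin_l 1 (Rmin ((m / 2) / (A + m / 4 + 1)) ((m2 / 2) / (Rabs B' + 1)))).
    assert (Q2 := Rmin_r 1 (Rmin ((m / 2) / (A + m / 4 + 1)) ((m2 / 2) / (Rabs B' + 1)))).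
    assert (Q3 := Rmin_l ((m / 2) / (A + m / 4 + 1)) ((m2 / 2) / (Rabs B' + 1))).
    assert (Q4 := Rmin_r ((m / 2) / (A + m / 4 + 1)) ((m2 / 2) / (Rabs B' + 1))).
    fold q in Q1, Q2.
    assert (0 < q) by (unfold q; apply Rmin_pos; [lra| apply Rmin_pos; auto]).
    split; [lra|split].
    - assert ((A + m / 4) * q <= (A + m / 4 + 1) * ((m / 2) / (A + m / 4 + 1))).
      { apply Rmult_le_compat; lra. }
      replace ((A + m / 4 + 1) * ((m / 2) / (A + m / 4 + 1))) with (m / 2) in H1 by (field; lra).
      lra.
    - assert (Rabs B' * q <= (Rabs B' + 1) * ((m2 / 2) / (Rabs B' + 1))).
      { apply Rmult_le_compat; lra. }
      replace ((Rabs B' + 1) * ((m2 / 2) / (Rabs B' + 1))) with (m2 / 2) in H1 by (field; lra).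
      lra. }
  destruct Hq as [[Hq0 Hq1] [HqA HqB]].
  set (gamma := Rmin (Rmin (m / 4) (m2 / 4)) (ln (1 + q) / (h + 1))).
  assert (Hln : 0 < ln (1 + q)) by (rewrite <- ln_1; apply ln_increasing; lra).
  assert (Hgam : 0 < gamma /\ gamma <= m / 4 /\ gamma <= m2 / 4 /\ exp (gamma * h) <= 1 + q).
  { assert (G1 := Rmin_l (Rmin (m / 4) (m2 / 4)) (ln (1 + q) / (h + 1))).
    assert (G2 := Rmin_r (Rmin (m / 4) (m2 / 4)) (ln (1 + q) / (h + 1))).
    assert (G3 := Rmin_l (m / 4) (m2 / 4)). assert (G4 := Rmin_r (m / 4) (m2 / 4)).
    fold gamma in G1, G2.
    assert (0 < ln (1 + q) / (h + 1)) by (apply Rdiv_lt_0_compat; lra).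
    split; [unfold gamma; apply Rmin_pos; [apply Rmin_pos; lra| auto]|].
    split; [lra|split; [lra|]].
    rewrite <- (exp_ln (1 + q)) by lra. apply exp_le.
    assert (gamma * (h + 1) <= ln (1 + q)).
    { apply (Rmult_le_compat_r (h + 1)) in G2; [|lra].
      replace (ln (1 + q) / (h + 1) * (h + 1)) with (ln (1 + q)) in G2 by (field; lra). auto. }
    assert (0 <= gamma) by (unfold gamma; apply Rlt_le, Rmin_pos; [apply Rmin_pos; lra| auto]).
    nra. }
  destruct Hgam as [Hg0 [Hgm [Hgm2 HgG]]].
  set (delta := Rmin (bL / 3) (bR / 3)).
  assert (Hdel : 0 < delta /\ 3 * delta <= bL /\ 3 * delta <= bR).
  { assert (G1 := Rmin_l (bL / 3) (bR / 3)). assert (G2 := Rmin_r (bL / 3) (bR / 3)).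
    fold delta in G1, G2. split; [unfold delta; apply Rmin_pos; lra| lra]. }
  destruct Hdel as [Hd0 [HdL HdR]].
  exists gamma, delta. split; [auto| split; [auto|]].

  intros w Rr Hsol _ _ HRr Hleft Hright Hinit Hmid t z Ht.
  destruct Hsol as [Hwc Hwd].
  assert (Hch : 0 <= c * h) by nra.
  assert (Hwc2 : cont2r w).
  { intros t0 z0 Ht0 e He. destruct (Hwc t0 z0 ltac:(lra) e He) as [d [Hd Hdd]].
    exists d; split; auto. intros; apply Hdd; auto; lra. }
  set (GG := exp (gamma * h)).
  assert (HG1 : 1 <= GG) by (apply exp_ge1; nra).
  assert (Hphi_ex : forall x, ex_derive phi x) by (intro x; apply Hphi_d).
  assert (Hphi_ex2 : forall x, ex_derive (Derive phi) x) by (intro x; apply Hphi_d).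
  set (PhiL := fun t z => phi z + delta * (exp (lam * z) * exp (- gamma * t))).
  set (PLt := fun t z => delta * (exp (lam * z) * (- gamma * exp (- gamma * t)))).
  set (PLz := fun t z => Derive phi z + delta * (lam * exp (lam * z) * exp (- gamma * t))).
  set (PLzz := fun t z => Derive (Derive phi) z + delta * (lam * lam * exp (lam * z) * exp (- gamma * t))).
  assert (HuL : forall t z, 0 <= t -> z <= - Rr - c * h -> w t z - PhiL t z <= 0).
  { intros t0 z0 Ht0 Hz0.
    apply (cmp (fun t z => w t z - PhiL t z) (-1) (- Rr - c * h) c h L delta).
    - right; reflexivity.
    - auto.
    - auto.
    - apply cont2r_minus; auto. intros; apply cont_phiL; auto.
    - intros t1 z1 Ht1 Hz1. cbv beta. unfold PhiL.
      destruct (Hleft t1 z1 ltac:(lra) ltac:(lra)) as [[_ Hw] _].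
      assert (0 <= delta * (exp (lam * z1) * exp (- gamma * t1))) by
        (apply Rmult_le_pos; [lra| apply Rmult_le_pos; apply Rlt_le, exp_pos]).
      specialize (Hphi_pos z1). lra.
    - intros z1 Hz1. cbv beta. unfold PhiL.
      specialize (Hinit 0 z1 ltac:(lra)). unfold eta in Hinit.
      assert (Rmin (exp (lam * z1)) 1 <= exp (lam * z1)) by apply Rmin_l.
      replace (- gamma * 0) with 0 by ring. rewrite exp_0.
      assert (delta * Rmin (exp (lam * z1)) 1 <= delta * exp (lam * z1)) by (apply Rmult_le_compat_l; lra).
      lra.
    - intros t1 Ht1. cbv beta. unfold PhiL.
      specialize (Hmid t1 (- Rr - c * h) Ht1 ltac:(lra)).
      assert (0 <= delta * (exp (lam * (- Rr - c * h)) * exp (- gamma * t1))) by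
        (apply Rmult_le_pos; [lra| apply Rmult_le_pos; apply Rlt_le, exp_pos]).
      lra.
    - intros t1 z1 Ht1 Hz1. destruct (Hwd t1 z1 Ht1) as [Wt [_ [Wzz Hpde]]].
      apply (u_deriv g w PhiL PLt PLz PLzz c h L t1 z1); auto.
      + intro y; apply (Hwd t1 y Ht1).
      + unfold PhiL, PLt. auto_derive; auto. ring.
      + intro y. unfold PhiL, PLz. auto_derive; auto. change (fun x : R => phi x) with phi. ring.
      + unfold PLz, PLzz. auto_derive; auto. change (fun x : R => Derive phi x) with (Derive phi). ring.
      +
        assert (Hz1' : z1 < - Rr - c * h) by lra.
        set (e1 := exp (lam * z1)). set (e2 := exp (- gamma * t1)).
        assert (He1 : 0 < e1 <= 1) by (split; [apply exp_pos| apply exp_le1; nra]).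
        assert (He2 : 0 < e2 <= 1) by (split; [apply exp_pos| apply exp_le1; nra]).
        assert (eq1 : exp (lam * (z1 - c * h)) = e1 * Ex)
          by (unfold e1, Ex; rewrite <- exp_plus; f_equal; ring).
        assert (eq2 : exp (- gamma * (t1 - h)) = e2 * GG)
          by (unfold e2, GG; rewrite <- exp_plus; f_equal; ring).
        set (a := phi (z1 - c * h)).
        set (sv := delta * (e1 * e2) * Ex * GG).
        assert (HPd : PhiL (t1 - h) (z1 - c * h) = a + sv)
          by (unfold PhiL, a, sv; rewrite eq1, eq2; ring).
        rewrite HPd.
        assert (Ha : 0 <= a <= delta).
        { destruct (Hleft 0 (z1 - c * h) ltac:(lra) ltac:(lra)) as [_ Hp]. unfold a; lra. }
        assert (HE : 0 < e1 * e2 <= 1) by (split; [nra| nra]).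
        assert (HG2 : GG <= 2) by (unfold GG; lra). assert (HExG : Ex * GG <= 2) by nra.
        assert (Hsv : 0 <= sv <= 2 * delta).
        { unfold sv. split.
          - apply Rmult_le_pos; [apply Rmult_le_pos; [nra| lra]| lra].
          - assert (0 <= delta * (e1 * e2)) by nra.
            assert (delta * (e1 * e2) <= delta) by nra.
            assert (0 <= Ex * GG) by nra.
            replace (delta * (e1 * e2) * Ex * GG) with ((delta * (e1 * e2)) * (Ex * GG)) by ring.
            nra. }
        assert (Hgs := HgL a sv ltac:(lra) ltac:(lra) ltac:(lra)).
        assert (Hrx : (D0 + rho) * Ex = A + m / 4) by (unfold rho, A; field; lra).
        assert (Hkey : (A + m / 4) * GG <= A + m - gamma).
        { assert ((A + m / 4) * GG <= (A + m / 4) * (1 + q)) by (apply Rmult_le_compat_l; [lra| unfold GG; lra]).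
          lra. }
        assert (HdE : 0 < delta * (e1 * e2)) by nra.
        assert (Hk2 : (A + m / 4) * GG * (delta * (e1 * e2)) <= (A + m - gamma) * (delta * (e1 * e2)))
          by (apply Rmult_le_compat_r; lra).
        assert (Hsv2 : (D0 + rho) * sv = (A + m / 4) * GG * (delta * (e1 * e2)))
          by (unfold sv; rewrite <- Hrx; ring).
        specialize (Hprof z1). simpl in Hprof. fold a in Hprof.
        assert (Heq : PLzz t1 z1 - c * PLz t1 z1 - PhiL t1 z1 + g (a + sv) - PLt t1 z1 =
           (Derive (Derive phi) z1 - c * Derive phi z1 - phi z1) + g (a + sv)
           + delta * (e1 * e2) * ((lam ^ 2 - c * lam - 1) + gamma))
          by (unfold PLzz, PLz, PhiL, PLt; fold e1 e2; ring).
        rewrite Hchi_eq in Heq.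
        assert (Hprof2 : Derive (Derive phi) z1 - c * Derive phi z1 - phi z1 + g a = 0) by exact Hprof.
        lra.
    - intros t1 z1 Ht1 Hz1 Hor. cbv beta. unfold PhiL.
      destruct Hor as [Hneg|Hpos]; [|lra].
      specialize (Hinit (t1 - h) (z1 - c * h) ltac:(lra)). unfold eta in Hinit.
      assert (Rmin (exp (lam * (z1 - c * h))) 1 <= exp (lam * (z1 - c * h))) by apply Rmin_l.
      assert (1 <= exp (- gamma * (t1 - h))) by (apply exp_ge1; nra).
      assert (0 < exp (lam * (z1 - c * h))) by apply exp_pos.
      assert (delta * Rmin (exp (lam * (z1 - c * h))) 1 <=
              delta * (exp (lam * (z1 - c * h)) * exp (- gamma * (t1 - h)))).
      { apply Rmult_le_compat_l; [lra|]. nra. }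
      lra.
    - auto.
    - lra. }

  set (PhiR := fun t z => phi z + delta * exp (- gamma * t)).
  set (PRt := fun (t z : R) => delta * (- gamma * exp (- gamma * t))).
  set (PRz := fun (t z : R) => Derive phi z).
  set (PRzz := fun (t z : R) => Derive (Derive phi) z).
  assert (HuR : forall t z, 0 <= t -> Rr + c * h <= z -> w t z - PhiR t z <= 0).
  { intros t0 z0 Ht0 Hz0.
    apply (cmp (fun t z => w t z - PhiR t z) 1 (Rr + c * h) c h L (2 * delta)).
    - left; reflexivity.
    - auto.
    - auto.
    - apply cont2r_minus; auto. intros; apply cont_phiR; auto.
    - intros t1 z1 Ht1 Hz1. cbv beta. unfold PhiR.
      destruct (Hright t1 z1 ltac:(lra) ltac:(lra)) as [Hw Hp].
      assert (0 <= delta * exp (- gamma * t1)) by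
        (apply Rmult_le_pos; [lra| apply Rlt_le, exp_pos]).
      unfold Rabs in Hw, Hp. destruct Rcase_abs in Hw; destruct Rcase_abs in Hp; lra.
    - intros z1 Hz1. cbv beta. unfold PhiR.
      specialize (Hinit 0 z1 ltac:(lra)). unfold eta in Hinit.
      assert (Rmin (exp (lam * z1)) 1 <= 1) by apply Rmin_r.
      replace (- gamma * 0) with 0 by ring. rewrite exp_0.
      assert (delta * Rmin (exp (lam * z1)) 1 <= delta * 1) by (apply Rmult_le_compat_l; lra).
      lra.
    - intros t1 Ht1. cbv beta. unfold PhiR.
      specialize (Hmid t1 (Rr + c * h) Ht1 ltac:(lra)).
      assert (0 <= delta * exp (- gamma * t1)) by
        (apply Rmult_le_pos; [lra| apply Rlt_le, exp_pos]).
      lra.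
    - intros t1 z1 Ht1 Hz1. destruct (Hwd t1 z1 Ht1) as [Wt [_ [Wzz Hpde]]].
      apply (u_deriv g w PhiR PRt PRz PRzz c h L t1 z1); auto.
      + intro y; apply (Hwd t1 y Ht1).
      + unfold PhiR, PRt. auto_derive; auto. ring.
      + intro y. unfold PhiR, PRz. auto_derive; auto. change (fun x : R => phi x) with phi. ring.
      + unfold PRz, PRzz. auto_derive; auto. change (fun x : R => Derive phi x) with (Derive phi). ring.
      +
        assert (Hz1' : Rr + c * h < z1) by lra.
        set (e2 := exp (- gamma * t1)).
        assert (He2 : 0 < e2 <= 1) by (split; [apply exp_pos| apply exp_le1; nra]).
        assert (eq2 : exp (- gamma * (t1 - h)) = e2 * GG)
          by (unfold e2, GG; rewrite <- exp_plus; f_equal; ring).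
        set (a := phi (z1 - c * h)).
        set (sv := delta * e2 * GG).
        assert (HPd : PhiR (t1 - h) (z1 - c * h) = a + sv)
          by (unfold PhiR, a, sv; rewrite eq2; ring).
        rewrite HPd.
        assert (Ha : kappa - delta < a < kappa + delta).
        { destruct (Hright 0 (z1 - c * h) ltac:(lra) ltac:(lra)) as [_ Hp].
          unfold a. unfold Rabs in Hp; destruct Rcase_abs in Hp; lra. }
        assert (HG2 : GG <= 2) by (unfold GG; lra).
        assert (Hsv : 0 <= sv <= 2 * delta).
        { unfold sv. split.
          - apply Rmult_le_pos; [apply Rmult_le_pos; lra| lra].
          - assert (delta * e2 <= delta) by nra. assert (0 <= delta * e2) by nra. nra. }
        assert (Hgs := HgR a sv ltac:(lra) ltac:(lra) ltac:(lra)). fold B' in Hgs.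
        assert (Hkey : B' * GG <= 1 - gamma).
        { assert (B' * (GG - 1) <= Rabs B' * (GG - 1)) by (apply Rmult_le_compat_r; [lra| apply Rle_abs]).
          assert (Rabs B' * (GG - 1) <= Rabs B' * q) by (apply Rmult_le_compat_l; [apply Rabs_pos| unfold GG; lra]).
          unfold B' in *. unfold m2 in *. lra. }
        assert (HdE : 0 < delta * e2) by nra.
        assert (Hk2 : B' * GG * (delta * e2) <= (1 - gamma) * (delta * e2))
          by (apply Rmult_le_compat_r; lra).
        assert (Hsv2 : B' * sv = B' * GG * (delta * e2)) by (unfold sv; ring).
        specialize (Hprof z1). simpl in Hprof. fold a in Hprof.
        assert (Hprof2 : Derive (Derive phi) z1 - c * Derive phi z1 - phi z1 + g a = 0) by exact Hprof.
        assert (Heq : PRzz t1 z1 - c * PRz t1 z1 - PhiR t1 z1 + g (a + sv) - PRt t1 z1 =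
           (Derive (Derive phi) z1 - c * Derive phi z1 - phi z1) + g (a + sv)
           + delta * e2 * (gamma - 1))
          by (unfold PRzz, PRz, PhiR, PRt; fold e2; ring).
        lra.
    - intros t1 z1 Ht1 Hz1 Hor. cbv beta. unfold PhiR.
      assert (0 < exp (- gamma * (t1 - h))) by apply exp_pos.
      destruct (Rlt_or_le (t1 - h) 0) as [Hneg|Hnn].
      + specialize (Hinit (t1 - h) (z1 - c * h) ltac:(lra)). unfold eta in Hinit.
        assert (Rmin (exp (lam * (z1 - c * h))) 1 <= 1) by apply Rmin_r.
        assert (1 <= exp (- gamma * (t1 - h))) by (apply exp_ge1; nra).
        assert (delta * Rmin (exp (lam * (z1 - c * h))) 1 <= delta * exp (- gamma * (t1 - h))).
        { apply Rmult_le_compat_l; lra. }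
        lra.
      + destruct Hor as [Hneg|Hpos]; [lra|].
        specialize (Hmid (t1 - h) (z1 - c * h) Hnn ltac:(lra)).
        assert (0 <= delta * exp (- gamma * (t1 - h))) by (apply Rmult_le_pos; lra).
        lra.
    - auto.
    - lra. }
  assert (Hetap : 0 < eta lam z) by (unfold eta; apply Rmin_pos; [apply exp_pos| lra]).
  assert (He2 : 0 < exp (- gamma * t)) by apply exp_pos.
  destruct (Rlt_or_le z (- Rr - c * h)) as [Hz|Hz].
  - specialize (HuL t z Ht ltac:(lra)). unfold PhiL in HuL.
    assert (eta lam z = exp (lam * z)).
    { unfold eta. apply Rmin_left. apply exp_le1. nra. }
    rewrite H. lra.
  - destruct (Rle_or_lt z (Rr + c * h)) as [Hz2|Hz2].
    + specialize (Hmid t z Ht ltac:(lra)).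
      assert (0 <= delta * eta lam z * exp (- gamma * t)) by
        (apply Rmult_le_pos; [apply Rmult_le_pos|]; lra).
      lra.
    + specialize (HuR t z Ht ltac:(lra)). unfold PhiR in HuR.
      assert (eta lam z = 1).
      { unfold eta. apply Rmin_right. apply exp_ge1. nra. }
      rewrite H. lra.
Qed.
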